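(* Within the pseudovariety $\mathsf M$ of all finite monoids, the pseudoidentity $x^\omega=1$ is h-strong.
   Context: $\mathsf M$ is the pseudovariety of finite monoids (signature: multiplication and $1$); $\Omega_A\mathsf M$ is the free profinite monoid on a finite set $A$; in a profinite monoid $x^\omega=\lim x^{n!}$. An $\mathsf M$-pseudoidentity is $u=v$ with $u,v\in\Omega_B\mathsf M$, $B$ finite; it holds in a finite monoid $T$ if both sides agree under every continuous homomorphism $\Omega_B\mathsf M\to T$; $[\![\Sigma]\!]$ is the class of finite monoids satisfying $\Sigma$. Provability: for finite $A$, $\Sigma_0\subseteq\Omega_A\mathsf M\times\Omega_A\mathsf M$ is the set of pairs $(\mathbf t(\varphi(u),w_1,\dots,w_n),\mathbf t(\varphi(v),w_1,\dots,w_n))$ with $u=v$ or $v=u$ in $\Sigma$ ($u,v\in\Omega_B\mathsf M$), $\varphi:\Omega_B\mathsf M\to\Omega_A\mathsf M$ a continuous homomorphism, $\mathbf t$ a monoid term, $w_i\in\Omega_A\mathsf M$; $\Sigma_{2\alpha+1}$ is the transitive closure of $\Sigma_{2\alpha}$, $\Sigma_{2\alpha+2}$ the topological closure of $\Sigma_{2\alpha+1}$, unions at limit ordinals; $u=v$ is provable from $\Sigma$ if $(u,v)\in\bigcup_\alpha\Sigma_\alpha$. A pseudoidentity $\varepsilon$ is h-strong within $\mathsf M$ if every $\mathsf M$-pseudoidentity valid in $[\![\{\varepsilon\}]\!]$ is provable from $\{\varepsilon\}$. *)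

(* Defs.v *)
From mathcomp Require Import all_boot zify.

Set Implicit Arguments. Unset Strict Implicit. Unset Printing Implicit Defensive.

Record finMonoid := FinMonoid {
  fm_sort :> finType;
  fm_mul : fm_sort -> fm_sort -> fm_sort;
  fm_one : fm_sort;
  fm_mulA : associative fm_mul;
  fm_mul1 : left_id fm_one fm_mul;
  fm_mulr1 : right_id fm_one fm_mul }.

Arguments fm_mul {_}. Arguments fm_one {_}.

Definition is_mhom (S T : finMonoid) (f : S -> T) : Prop :=
  f fm_one = fm_one /\ forall x y, f (fm_mul x y) = fm_mul (f x) (f y).

Fixpoint fm_pow (T : finMonoid) (a : T) (n : nat) : T :=
  if n is n'.+1 then fm_mul a (fm_pow a n') else fm_one.

Lemma mhom_pow (S T : finMonoid) (f : S -> T) a n : is_mhom f -> f (fm_pow a n) = fm_pow (f a) n.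
Proof. by case=> h1 hM; elim: n => [|n IH] //=; rewrite hM IH. Qed.

Lemma fm_powD (T : finMonoid) (a : T) m n :
  fm_pow a (m + n) = fm_mul (fm_pow a m) (fm_pow a n).
Proof. by elim: m => [|m IH] /=; rewrite ?fm_mul1 // IH fm_mulA. Qed.

Lemma fm_pow_fact (T : finMonoid) (a : T) m :
  #|T| <= m -> fm_pow a m`! = fm_pow a (#|T|)`!.
Proof.
move=> hm.
have : ~~ injectiveb (fun i : 'I_(#|T|.+1) => fm_pow a i).
  apply/negP => /injectiveP inj; have := @leq_card _ _ _ inj.
  by rewrite card_ord ltnn.
case/injectivePn => i [j] nij eij.
wlog lij : i j nij eij / i < j.
  move=> W; case: (ltngtP i j) => [h|h|h]; first exact: W h.
    by apply: (W j i) => //; rewrite eq_sym.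
  by move: nij; rewrite (val_inj h) eqxx.
set k := #|T|; set p := j - i.
have hper n : i <= n -> forall q, fm_pow a (n + q * p) = fm_pow a n.
  move=> hin; elim=> [|q IH]; first by rewrite addn0.
  rewrite mulSn addnA -IH.
  have -> : n + p + q * p = (n - i) + j + q * p.
    rewrite /p; have := ltn_ord j; lia.
  have -> : n + q * p = (n - i) + i + q * p by rewrite subnK.
  by rewrite !fm_powD eij.
have p0 : 0 < p by rewrite subn_gt0.
have pk : p <= k by rewrite /p; have := ltn_ord j; lia.
have hp : p %| k`! by apply: dvdn_fact; rewrite p0 pk.
have hpm : p %| m`! by apply: dvdn_fact; rewrite p0 (leq_trans pk hm).
have ik : i <= k`! by apply: leq_trans (fact_geq k); have := ltn_ord j; lia.
have km : k`! <= m`! := leq_fact hm.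
have -> : m`! = k`! + (m`! - k`!) %/ p * p.
  by rewrite divnK ?subnKC // dvdn_sub.
exact: hper.
Qed.

(* ---------- free profinite monoid Omega_A M, as implicit operations ---------- *)
Definition implicit_op (A : finType) := forall T : finMonoid, (A -> T) -> T.
Definition natural (A : finType) (w : implicit_op A) : Prop :=
  forall (S T : finMonoid) (f : S -> T), is_mhom f ->
    forall e : A -> S, f (w S e) = w T (f \o e).
Definition Omega (A : finType) := {w : implicit_op A | natural w}.
Definition ev (A : finType) (x : Omega A) (T : finMonoid) (e : A -> T) : T :=
  proj1_sig x T e.
Arguments ev {A} x T e.

Section Ops.
Variable A : finType.

Lemma om_mul_nat (x y : Omega A) :
  natural (fun T e => fm_mul (ev x T e) (ev y T e)).
Proof.
move=> S T f hf e; case: (hf) => _ hM; rewrite hM.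
by rewrite /ev (proj2_sig x _ _ _ hf) (proj2_sig y _ _ _ hf).
Qed.
Definition om_mul (x y : Omega A) : Omega A := exist _ _ (om_mul_nat x y).

Lemma om_one_nat : natural (fun T (e : A -> T) => fm_one).
Proof. by move=> S T f [h1 _] e. Qed.
Definition om_one : Omega A := exist _ _ om_one_nat.

(* x^omega = lim x^{n!}: in a finite monoid T the sequence a^{n!} is
   constant from n = #|T| on (lemma fm_pow_fact), so the T-component of the
   limit is a^{#|T|!}. *)
Lemma om_omega_nat (x : Omega A) :
  natural (fun T e => fm_pow (ev x T e) (#|T|)`!).
Proof.
move=> S T f hf e; set M := maxn #|S| #|T|.
rewrite -(fm_pow_fact _ (leq_maxl #|S| #|T|)) (mhom_pow _ _ hf).
by rewrite /ev (proj2_sig x _ _ _ hf) (fm_pow_fact _ (leq_maxr #|S| #|T|)).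
Qed.
Definition om_omega (x : Omega A) : Omega A := exist _ _ (om_omega_nat x).

Lemma om_letter_nat (a : A) : natural (fun T (e : A -> T) => e a).
Proof. by []. Qed.
Definition om_letter (a : A) : Omega A := exist _ _ (om_letter_nat a).

Definition test := {T : finMonoid & A -> T}.
(* x and y agree on every test in ts; the sets {y | agree ts x y} form a
   base of neighbourhoods of x *)
Fixpoint agree (ts : seq test) (x y : Omega A) : Prop :=
  if ts is t :: ts' then
    ev x (projT1 t) (projT2 t) = ev y (projT1 t) (projT2 t) /\ agree ts' x y
  else True.

(* topologically closed binary relation on Omega A (closed in Omega A x Omega A) *)
Definition closed_rel (R : Omega A -> Omega A -> Prop) : Prop :=
  forall u v, (forall ts1 ts2 : seq test,
      exists u' v', R u' v' /\ agree ts1 u u' /\ agree ts2 v v') -> R u v.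

(* evaluation of a monoid term (a word over variables 0, 1, 2, ...) *)
Definition term_eval (t : seq nat) (vals : seq (Omega A)) : Omega A :=
  foldr (fun i acc => om_mul (nth om_one vals i) acc) om_one t.
End Ops.

Arguments om_one {A}.

Definition om_hom (B A : finType) (phi : Omega B -> Omega A) : Prop :=
  phi om_one = om_one /\ forall x y, phi (om_mul x y) = om_mul (phi x) (phi y).
Definition om_continuous (B A : finType) (phi : Omega B -> Omega A) : Prop :=
  forall (x : Omega B) (ts : seq (test A)), exists ts' : seq (test B),
    forall y, agree ts' x y -> agree ts (phi x) (phi y).

Definition om_hom_fin (B : finType) (T : finMonoid) (psi : Omega B -> T) : Prop :=
  psi om_one = fm_one /\ forall x y, psi (om_mul x y) = fm_mul (psi x) (psi y).
Definition om_continuous_fin (B : finType) (T : finMonoid) (psi : Omega B -> T)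
  : Prop :=
  forall x : Omega B, exists ts : seq (test B),
    forall y, agree ts x y -> psi x = psi y.

Definition pseudoid := {B : finType & (Omega B * Omega B)%type}.

Definition holds_in (T : finMonoid) (B : finType) (u v : Omega B) : Prop :=
  forall psi : Omega B -> T, om_hom_fin psi -> om_continuous_fin psi ->
    psi u = psi v.

Definition models (Sigma : pseudoid -> Prop) (T : finMonoid) : Prop :=
  forall e, Sigma e -> holds_in T (projT2 e).1 (projT2 e).2.

Definition Sigma0 (Sigma : pseudoid -> Prop) (A : finType)
    (p q : Omega A) : Prop :=
  exists (e : pseudoid) (sym : bool) (phi : Omega (projT1 e) -> Omega A)
         (t : seq nat) (ws : seq (Omega A)),
    [/\ Sigma e, om_hom phi, om_continuous phi,
        p = term_eval t (phi (if sym then (projT2 e).2 else (projT2 e).1) :: ws)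
      & q = term_eval t (phi (if sym then (projT2 e).1 else (projT2 e).2) :: ws)].

(* the union of the transfinite chain Sigma_alpha is the least relation
   containing Sigma_0 that is transitive and topologically closed *)
Definition provable (Sigma : pseudoid -> Prop) (A : finType)
    (p q : Omega A) : Prop :=
  forall R : Omega A -> Omega A -> Prop,
    (forall p' q', @Sigma0 Sigma A p' q' -> R p' q') ->
    (forall a b c, R a b -> R b c -> R a c) ->
    closed_rel R -> R p q.

Definition h_strong (Sigma : pseudoid -> Prop) : Prop :=
  forall (B : finType) (u v : Omega B),
    (forall T : finMonoid, models Sigma T -> holds_in T u v) ->
    @provable Sigma B u v.

(* the pseudoidentity x^omega = 1 over the one-letter alphabet {x} = unit *)
Definition omega_eq_one : pseudoid :=
  existT (fun B : finType => (Omega B * Omega B)%type) unit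
    (om_omega (om_letter tt), om_one).

(* Main.v *)
Require Import Defs.
From mathcomp Require Import all_boot zify.
From Stdlib Require Import FunctionalExtensionality ProofIrrelevance.
Set Implicit Arguments. Unset Strict Implicit. Unset Printing Implicit Defensive.

Local Notation "x ** y" := (fm_mul x y) (at level 40, left associativity).

Section GenMon.
Variable T : finMonoid.
Implicit Types a b x y : T.

Lemma fm_powS' a n : fm_pow a n.+1 = fm_pow a n ** a.
Proof. by rewrite -addn1 fm_powD /= fm_mulr1. Qed.

Lemma fm_pow_mul a m n : fm_pow a (m * n) = fm_pow (fm_pow a n) m.
Proof. by elim: m => [|m IH] //=; rewrite mulSn fm_powD IH. Qed.

Lemma fm_pow1 n : fm_pow (fm_one : T) n = fm_one.
Proof. by elim: n => [|n IH] //=; rewrite IH fm_mul1. Qed.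

Lemma fm_pow_1 a : fm_pow a 1 = a.
Proof. by rewrite /= fm_mulr1. Qed.

Lemma fm_pow_idem a : fm_pow a #|T|`! ** fm_pow a #|T|`! = fm_pow a #|T|`!.
Proof.
set n := #|T|; set e := fm_pow a n`!.
have h1 : fm_pow e n.+1 = e.
  by rewrite /e -fm_pow_mul -factS fm_pow_fact.
have h2 : fm_pow e ((n.+2) * (n.+1)) = e.
  rewrite /e -fm_pow_mul -mulnA -factS -factS fm_pow_fact // /n; lia.
have h3 j : fm_pow e (1 + j * n) = e.
  elim: j => [|j IH]; first by rewrite fm_pow_1.
  by rewrite mulSn addnCA fm_powD IH -fm_powS' h1.
have h4 : (n.+2) * (n.+1) = (1 + (n.+3) * n) + 1 by lia.
by rewrite h4 fm_powD h3 fm_pow_1 in h2.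
Qed.

Lemma fm_left_right a b : a ** b = fm_one -> b ** a = fm_one.
Proof.
move=> hab.
have inj : injective (fun t => b ** t).
  by move=> t1 t2 /= h; rewrite -(fm_mul1 t1) -hab -fm_mulA h fm_mulA hab fm_mul1.
have [t0 ht0] : exists t0, b ** t0 = fm_one.
  have /codomP [t0 ->] := injF_onto inj fm_one; by exists t0.
have -> : a = t0 by rewrite -(fm_mulr1 a) -ht0 fm_mulA hab fm_mul1.
done.
Qed.

Lemma fm_unit_pow l y : l ** y = fm_one ->
  forall m, #|T| <= m -> fm_pow y m`! = fm_one.
Proof.
move=> hly m hm.
have : ~~ injectiveb (fun i : 'I_(#|T|.+1) => fm_pow y i).
  apply/negP => /injectiveP inj; have := @leq_card _ _ _ inj.
  by rewrite card_ord ltnn.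
case/injectivePn => i [j] nij eij.
wlog lij : i j nij eij / i < j.
  move=> W; case: (ltngtP i j) => [h|h|h]; first exact: W h.
    by apply: (W j i) => //; rewrite eq_sym.
  by move: nij; rewrite (val_inj h) eqxx.
have li k : fm_pow l k ** fm_pow y k = fm_one.
  elim: k => [|k IH]; first by rewrite /= fm_mul1.
  by rewrite fm_powS' /= -fm_mulA (fm_mulA l) hly fm_mul1.
set d := j - i.
have hd : fm_pow y d = fm_one.
  have : fm_pow y j = fm_pow y i ** fm_pow y d by rewrite -fm_powD /d subnKC // ltnW.
  rewrite -eij => h.
  by rewrite -(fm_mul1 (fm_pow y d)) -(li i) -fm_mulA -h li.
have d0 : 0 < d by rewrite /d subn_gt0.
have dm : d <= m by apply: leq_trans hm; rewrite /d; have := ltn_ord j; lia.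
have /dvdnP [k ->] : d %| m`! by apply: dvdn_fact; rewrite d0 dm.
by rewrite fm_pow_mul hd fm_pow1.
Qed.

End GenMon.

Section Constr.

Definition unitM : finMonoid.
Proof.
refine (@FinMonoid unit (fun _ _ => tt) tt _ _ _); by do ?case.
Defined.

Variables S T : finMonoid.
Definition pair_mul (x y : (S * T)%type) : (S * T)%type := (x.1 ** y.1, x.2 ** y.2).
Definition pairM : finMonoid.
Proof.
refine (@FinMonoid (S * T)%type pair_mul (fm_one, fm_one) _ _ _).
- by move=> [a1 a2] [b1 b2] [c1 c2]; rewrite /pair_mul /= !fm_mulA.
- by move=> [a1 a2]; rewrite /pair_mul /= !fm_mul1.
- by move=> [a1 a2]; rewrite /pair_mul /= !fm_mulr1.
Defined.

Lemma fst_mhom : is_mhom (fun x : pairM => x.1 : S).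
Proof. by []. Qed.
Lemma snd_mhom : is_mhom (fun x : pairM => x.2 : T).
Proof. by []. Qed.

Definition opt_mul (x y : option S) : option S :=
  match x, y with
  | None, _ => y
  | _, None => x
  | Some a, Some b => Some (a ** b)
  end.
Definition optM : finMonoid.
Proof.
refine (@FinMonoid (option S) opt_mul None _ _ _).
- by move=> [a|] [b|] [c|] //=; rewrite fm_mulA.
- by [].
- by case.
Defined.

End Constr.

Section Words.
Variable B : finType.

Definition wval (T : finMonoid) (e : B -> T) (w : seq B) : T :=
  foldr (fun b acc => e b ** acc) fm_one w.

Lemma wval_cat (T : finMonoid) (e : B -> T) s1 s2 :
  wval e (s1 ++ s2) = wval e s1 ** wval e s2.
Proof. by elim: s1 => [|b s IH] /=; rewrite ?fm_mul1 // IH fm_mulA. Qed.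

Lemma wval_hom (S T : finMonoid) (f : S -> T) (e : B -> S) w :
  is_mhom f -> f (wval e w) = wval (f \o e) w.
Proof. by case=> h1 hM; elim: w => [|b w IH] //=; rewrite hM IH. Qed.

Definition isS (T : finMonoid) (e : B -> T) (y : T) := exists w, wval e w = y.

Lemma isS_one (T : finMonoid) (e : B -> T) : isS e fm_one.
Proof. by exists [::]. Qed.
Lemma isS_mul (T : finMonoid) (e : B -> T) x y : isS e x -> isS e y -> isS e (x ** y).
Proof. by case=> w1 <- [w2 <-]; exists (w1 ++ w2); rewrite wval_cat. Qed.
Lemma isS_letter (T : finMonoid) (e : B -> T) b : isS e (e b).
Proof. by exists [:: b]; rewrite /= fm_mulr1. Qed.
Lemma isS_pow (T : finMonoid) (e : B -> T) x n : isS e x -> isS e (fm_pow x n).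
Proof. by move=> hx; elim: n => [|n IH] /=; [apply: isS_one | apply: isS_mul]. Qed.
Lemma isS_wval (T : finMonoid) (e : B -> T) w : isS e (wval e w).
Proof. by exists w. Qed.

Fixpoint allwords (N : nat) : seq (seq B) :=
  if N is N'.+1 then [::] :: [seq b :: w | b <- enum B, w <- allwords N'] else [::].

Lemma mem_allwords N w : size w < N -> w \in allwords N.
Proof.
elim: N w => [|N IH] [|b w] //= h.
rewrite in_cons; apply/orP; right.
by apply: (allpairs_f (fun b w => b :: w)); rewrite ?mem_enum // IH.
Qed.

Lemma cover_card (T : finMonoid) (e : B -> T) w :
  exists w', size w' < #|T| /\ wval e w' = wval e w.
Proof.
move: {2}(size w) (leqnn (size w)) => n; elim: n w => [|n IH] w hw.
  case: w hw => // _; exists [::]; split => //.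
  by apply/card_gt0P; exists fm_one.
case: (ltnP (size w) #|T|) => hsz; first by exists w.
have : ~~ injectiveb (fun i : 'I_(size w).+1 => wval e (take i w)).
  apply/negP => /injectiveP inj; have := @leq_card _ _ _ inj.
  by rewrite card_ord; apply/negP; rewrite -ltnNge ltnS.
case/injectivePn => i [j] nij eij.
wlog lij : i j nij eij / i < j.
  move=> W; case: (ltngtP i j) => [h|h|h]; first exact: W h.
    by apply: (W j i) => //; rewrite eq_sym.
  by move: nij; rewrite (val_inj h) eqxx.
have jw : j <= size w by rewrite -ltnS.
have iw : i < size w by apply: leq_trans lij jw.
have [|w' [h1 h2]] := IH (take i w ++ drop j w).
  rewrite size_cat size_take iw size_drop; lia.
exists w'; split => //; rewrite h2 wval_cat eij -wval_cat.
by rewrite cat_take_drop.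
Qed.

Definition inSb (T : finMonoid) (e : B -> T) (y : T) : bool :=
  has (fun w => wval e w == y) (allwords #|T|).

Lemma inSbP (T : finMonoid) (e : B -> T) y : reflect (isS e y) (inSb e y).
Proof.
apply: (iffP hasP).
  by case=> w _ /eqP <-; exists w.
case=> w <-; have [w' [h1 h2]] := cover_card e w.
by exists w'; rewrite ?mem_allwords // h2.
Qed.

Section CS.
Variables (T : finMonoid) (e : B -> T) (f : T).
Hypotheses (Hff : f ** f = f) (HfS : isS e f).

Definition cs_pred (y : T) : bool := (f ** (y ** f) == y) && inSb e y.

Lemma cs_predP y : cs_pred y -> [/\ f ** y = y, y ** f = y & isS e y].
Proof.
case/andP => /eqP h /inSbP hs; split => //.
  by rewrite -h fm_mulA Hff.
by rewrite -h -!fm_mulA Hff.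
Qed.

Lemma cs_predI y : f ** y = y -> y ** f = y -> isS e y -> cs_pred y.
Proof. by move=> h1 h2 h3; rewrite /cs_pred h2 h1 eqxx; apply/inSbP. Qed.

Definition cs_type := {y : T | cs_pred y}.

Lemma cs_mul_proof (x y : cs_type) : cs_pred (val x ** val y).
Proof.
case: x => x hx; case: y => y hy /=.
case/cs_predP: hx => x1 x2 x3; case/cs_predP: hy => y1 y2 y3.
apply: cs_predI; last exact: isS_mul.
  by rewrite fm_mulA x1.
by rewrite -fm_mulA y2.
Qed.

Lemma cs_one_proof : cs_pred f.
Proof. by apply: cs_predI. Qed.

Definition cs_mul (x y : cs_type) : cs_type := exist (fun y => cs_pred y) _ (cs_mul_proof x y).
Definition cs_one : cs_type := exist (fun y => cs_pred y) _ cs_one_proof.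

Definition CSM : finMonoid.
Proof.
refine (@FinMonoid cs_type cs_mul cs_one _ _ _).
- by move=> x y z; apply: val_inj; rewrite /= fm_mulA.
- by case=> y hy; apply: val_inj => /=; case/cs_predP: hy.
- by case=> y hy; apply: val_inj => /=; case/cs_predP: hy.
Defined.

Lemma CSM_pow (y : CSM) n : val (fm_pow y n) = f ** fm_pow (val y) n.
Proof.
elim: n => [|n IH] /=; first by rewrite fm_mulr1.
rewrite IH; case: y {IH} => y hy /=; case/cs_predP: hy => y1 y2 y3.
by rewrite !fm_mulA y2 y1.
Qed.

Lemma card_CSM : #|CSM| <= #|T|.
Proof. by rewrite /= card_sig max_card. Qed.

End CS.
End Words.

Section Om.
Variable B : finType.

Definition word_om (w : seq B) : Omega B :=
  foldr (fun b acc => om_mul (om_letter b) acc) om_one w.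

Lemma ev_word w (T : finMonoid) (e : B -> T) : ev (word_om w) T e = wval e w.
Proof. by elim: w => [|b w IH] //=; rewrite -IH. Qed.

Definition piw N := flatten (allwords B N).

Fixpoint q (N : nat) : Omega B :=
  if N is N'.+1 then
    om_omega (om_mul (q N') (om_mul (word_om (piw N')) (q N')))
  else om_one.

Lemma ev_qS N (T : finMonoid) (e : B -> T) : ev (q N.+1) T e =
  fm_pow (ev (q N) T e ** (wval e (piw N) ** ev (q N) T e)) #|T|`!.
Proof. by rewrite /= -ev_word. Qed.

Lemma isS_q N (T : finMonoid) (e : B -> T) : isS e (ev (q N) T e).
Proof.
elim: N => [|N IH]; first exact: isS_one.
rewrite ev_qS; apply: isS_pow; apply: isS_mul => //; apply: isS_mul => //.
exact: isS_wval.
Qed.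

Lemma q_idem N (T : finMonoid) (e : B -> T) :
  ev (q N.+1) T e ** ev (q N.+1) T e = ev (q N.+1) T e.
Proof. by rewrite ev_qS fm_pow_idem. Qed.

Definition Cov (T : finMonoid) (e : B -> T) L :=
  forall w, exists w', size w' < L /\ wval e w' = wval e w.

Definition Jmin (T : finMonoid) (e : B -> T) (f : T) :=
  forall y, isS e y -> exists a b, [/\ isS e a, isS e b & f = a ** (y ** b)].

Lemma piw_split N w : w \in allwords B N -> exists p1 p2, piw N = p1 ++ w ++ p2.
Proof.
rewrite /piw; move: (allwords B N) => l; case/splitPr => p1 p2.
by exists (flatten p1), (flatten p2); rewrite flatten_cat.
Qed.

Lemma q_Jmin (T : finMonoid) (e : B -> T) L N : Cov e L -> L <= N -> Jmin e (ev (q N.+1) T e).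
Proof.
move=> hc hLN y [w0 <-].
have [w1 [hs1 <-]] := hc w0.
have : w1 \in allwords B N by apply: mem_allwords; apply: leq_trans hs1 hLN.
case/piw_split => p1 [p2 hp].
rewrite ev_qS hp !wval_cat.
set x := ev (q N) T e.
have [k hk] : exists k, #|T|`! = k.+1 by exists (#|T|`!).-1; rewrite prednK // fact_gt0.
rewrite hk /=.
exists (x ** wval e p1), (wval e p2 ** x ** fm_pow (x ** (wval e p1 ** (wval e w1 ** wval e p2) ** x)) k).
split; [apply: isS_mul; [exact: isS_q | exact: isS_wval] | | by rewrite !fm_mulA].
apply: isS_mul; [apply: isS_mul; [exact: isS_wval | exact: isS_q] | ].
apply: isS_pow; apply: isS_mul; first exact: isS_q.
apply: isS_mul; last exact: isS_q.
by rewrite -!wval_cat; apply: isS_wval.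
Qed.


Lemma crit (T : finMonoid) (e : B -> T) (f : T) (Hff : f ** f = f) (HfS : isS e f) :
  Jmin e f -> forall y, isS e y -> f ** y = y -> y ** f = y ->
  forall m, #|T| <= m -> fm_pow y m`! = f.
Proof.
move=> hJ y hyS fy yf m hm.
have [a [b [haS hbS hab]]] := hJ y hyS.
pose G := CSM Hff HfS.
have py : cs_pred e f y by apply: cs_predI.
have pa : cs_pred e f (f ** (a ** f)).
  apply: cs_predI; first by rewrite fm_mulA Hff.
    by rewrite -!fm_mulA Hff.
  by apply: isS_mul => //; apply: isS_mul.
have pb : cs_pred e f (f ** (b ** f)).
  apply: cs_predI; first by rewrite fm_mulA Hff.
    by rewrite -!fm_mulA Hff.
  by apply: isS_mul => //; apply: isS_mul.
pose y' : G := exist (fun y => cs_pred e f y) y py.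
pose a' : G := exist (fun y => cs_pred e f y) _ pa.
pose b' : G := exist (fun y => cs_pred e f y) _ pb.
have h1 : a' ** y' ** b' = fm_one.
  apply: val_inj => /=.
  have -> : f ** (a ** f) ** y ** (f ** (b ** f)) = f ** (a ** (y ** b)) ** f.
    rewrite !fm_mulA -[_ ** f ** y]fm_mulA fy -[_ ** y ** f]fm_mulA yf.
    done.
  by rewrite -hab Hff Hff.
have h2 : (b' ** a') ** y' = fm_one.
  by rewrite -fm_mulA; apply: fm_left_right.
have h3 := fm_unit_pow h2 (leq_trans (card_CSM Hff HfS) hm).
have := f_equal val h3; rewrite CSM_pow /= => h4.
have [k hk] : exists k, m`! = k.+1 by exists (m`!).-1; rewrite prednK // fact_gt0.
by rewrite -h4 hk /= -{1}fy fm_mulA.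
Qed.

Lemma q_stab (T : finMonoid) (e : B -> T) L N : Cov e L -> L <= N ->
  ev (q N.+2) T e = ev (q N.+1) T e.
Proof.
move=> hc hLN; rewrite [LHS]ev_qS.
set f := ev (q N.+1) T e.
have Hff : f ** f = f by apply: q_idem.
have HfS : isS e f by apply: isS_q.
apply: (crit Hff HfS (q_Jmin hc hLN)) => //.
- apply: isS_mul => //; apply: isS_mul => //; exact: isS_wval.
- by rewrite fm_mulA Hff.
- by rewrite -!fm_mulA Hff.
Qed.

Lemma q_stab_all (T : finMonoid) (e : B -> T) L : Cov e L ->
  forall K, ev (q (K + L).+1) T e = ev (q L.+1) T e.
Proof.
move=> hc; elim=> [|K IH] //; rewrite addSn (q_stab hc) ?IH // ?leq_addl; exact: isT.
Qed.

Lemma Cov_card (T : finMonoid) (e : B -> T) : Cov e #|T|.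
Proof. move=> w; exact: cover_card. Qed.

Lemma Cov_hom (S T : finMonoid) (f : S -> T) (e : B -> S) :
  is_mhom f -> Cov (f \o e) #|S|.
Proof.
move=> hf w; have [w' [h1 h2]] := cover_card e w.
by exists w'; split => //; rewrite -!wval_hom // h2.
Qed.

Lemma q_eq (T : finMonoid) (e : B -> T) L1 L2 :
  Cov e L1 -> Cov e L2 -> ev (q L1.+1) T e = ev (q L2.+1) T e.
Proof.
move=> h1 h2; case: (leqP L1 L2) => h.
  by rewrite -(subnK h) q_stab_all.
by rewrite -(subnK (ltnW h)) q_stab_all.
Qed.

Lemma eps_nat : natural (fun T (e : B -> T) => ev (q #|T|.+1) T e).
Proof.
move=> S T f hf e; rewrite /ev (proj2_sig (q _) S T f hf e).
exact: (q_eq (Cov_hom e hf) (Cov_card _)).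
Qed.

Definition eps : Omega B := exist _ _ eps_nat.

Lemma eps_q (T : finMonoid) (e : B -> T) N : #|T| <= N ->
  ev eps T e = ev (q N.+1) T e.
Proof.
move=> h; apply: q_eq; first exact: Cov_card.
move=> w; have [w' [h1 h2]] := cover_card e w; exists w'; split => //.
exact: leq_trans h1 h.
Qed.

End Om.

Section Agree.
Variable A : finType.

Definition agree_all (x y : Omega A) := forall (T : finMonoid) (e : A -> T), ev x T e = ev y T e.

Lemma agree_of_all (ts : seq (test A)) (x y : Omega A) : agree_all x y -> agree ts x y.
Proof. by move=> h; elim: ts => //= t ts IH; split. Qed.

Lemma agree_refl (ts : seq (test A)) (x : Omega A) : agree ts x x.
Proof. by elim: ts => //= t ts IH; split. Qed.

Lemma agree_cat (ts1 ts2 : seq (test A)) (x y : Omega A) : agree (ts1 ++ ts2) x y -> agree ts1 x y /\ agree ts2 x y.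
Proof. by elim: ts1 => //= t ts IH [h1 /IH [h2 h3]]. Qed.

Lemma agree_mul (ts : seq (test A)) (x x' y y' : Omega A) : agree ts x x' -> agree ts y y' ->
  agree ts (om_mul x y) (om_mul x' y').
Proof.
elim: ts => //= t ts IH [h1 h2] [h3 h4]; split; last exact: IH.
by rewrite /ev /= -/(ev x _ _) -/(ev y _ _) h1 h3.
Qed.

Lemma om_eq (x y : Omega A) : proj1_sig x = proj1_sig y -> x = y.
Proof.
case: x => x hx; case: y => y hy /= h; subst y; f_equal; apply: proof_irrelevance.
Qed.

Section Subst.
Variables (B' : finType) (y : B' -> Omega A).

Lemma subst_nat (x : Omega B') :
  natural (fun T (e : A -> T) => ev x T (fun b => ev (y b) T e)).
Proof.
move=> S T f hf e /=; rewrite /ev (proj2_sig x S T f hf).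
congr (proj1_sig x T _); apply: functional_extensionality => b /=.
exact: (proj2_sig (y b) S T f hf e).
Qed.

Definition subst (x : Omega B') : Omega A := exist _ _ (subst_nat x).

Lemma subst_hom : om_hom subst.
Proof. by split; [apply: om_eq | move=> a b; apply: om_eq]. Qed.

Definition pull (t : test A) : test B' :=
  existT (fun T : finMonoid => B' -> T) (projT1 t) (fun b => ev (y b) (projT1 t) (projT2 t)).

Lemma agree_subst (ts : seq (test A)) (x z : Omega B') : agree (map pull ts) x z -> agree ts (subst x) (subst z).
Proof. by elim: ts => //= t ts IH [h1 h2]; split; [exact: h1 | exact: IH]. Qed.

Lemma subst_cont : om_continuous subst.
Proof. by move=> x ts; exists (map pull ts) => z; apply: agree_subst. Qed.

End Subst.
End Agree.

Definition Sig : pseudoid -> Prop := fun e => e = omega_eq_one.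

Section Prov.
Variable A : finType.
Local Notation prov := (@provable Sig A).

Lemma prov_S0 p q : Sigma0 Sig p q -> prov p q.
Proof. by move=> h R HS _ _; apply: HS. Qed.

Lemma prov_trans a b c : prov a b -> prov b c -> prov a c.
Proof. by move=> h1 h2 R HS HT HC; apply: HT (h1 R HS HT HC) (h2 R HS HT HC). Qed.

Lemma prov_closed : closed_rel prov.
Proof.
move=> u v H R HS HT HC; apply: (HC) => ts1 ts2.
have [u' [v' [h [a1 a2]]]] := H ts1 ts2.
by exists u', v'; split => //; exact: h R HS HT HC.
Qed.

Lemma prov_agree p q p' q' : prov p q -> agree_all p p' -> agree_all q q' -> prov p' q'.
Proof.
move=> h h1 h2; apply: prov_closed => ts1 ts2; exists p, q; split => //.
by split; apply: agree_of_all => T e; [rewrite h1 | rewrite h2].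
Qed.

Definition phiz (z : Omega A) : Omega unit -> Omega A := subst (fun _ : unit => z).

Lemma S0_inst (z : Omega A) (s : bool) t ws :
  Sigma0 Sig (term_eval t (phiz z (if s then om_one else om_omega (om_letter tt)) :: ws))
             (term_eval t (phiz z (if s then om_omega (om_letter tt) else om_one) :: ws)).
Proof.
exists omega_eq_one, s, (phiz z), t, ws; split => //.
- exact: subst_hom.
- exact: subst_cont.
Qed.

Lemma prov_omega (z : Omega A) : prov (om_omega z) om_one.
Proof.
apply: prov_agree (prov_S0 (S0_inst z false [:: 0] [::])) _ _ => T e /=.
  by rewrite /ev /= fm_mulr1.
by rewrite /ev /= fm_mulr1.
Qed.

Lemma prov_omega' (z : Omega A) : prov om_one (om_omega z).
Proof.
apply: prov_agree (prov_S0 (S0_inst z true [:: 0] [::])) _ _ => T e /=.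
  by rewrite /ev /= fm_mulr1.
by rewrite /ev /= fm_mulr1.
Qed.

Lemma prov_refl (x : Omega A) : prov x x.
Proof.
apply: prov_agree (prov_S0 (S0_inst x false [:: 1] [:: x])) _ _ => T e /=.
  by rewrite /ev /= fm_mulr1.
by rewrite /ev /= fm_mulr1.
Qed.

Lemma prov_sym (p q : Omega A) : prov p q -> prov q p.
Proof.
move=> h; apply: (h (fun a b => prov b a)).
- move=> a b [e [s [phi [t [ws [He Hh Hc Hp Hq]]]]]]; apply: prov_S0.
  exists e, (~~ s), phi, t, ws; split => //; by case: s Hp Hq.
- by move=> a b c h1 h2; exact: prov_trans h2 h1.
- move=> a b H; apply: prov_closed => ts1 ts2.
  have [a' [b' [h' [h1 h2]]]] := H ts2 ts1.
  by exists b', a'.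
Qed.

Definition maxt (t : seq nat) := foldr maxn 0 t.

Lemma leq_maxt t i : i \in t -> i <= maxt t.
Proof.
elim: t => //= j t IH; rewrite in_cons => /orP [/eqP ->|/IH h]; first exact: leq_maxl.
exact: leq_trans h (leq_maxr _ _).
Qed.

Definition ext (ws : seq (Omega A)) w t := ws ++ nseq (maxt t) om_one ++ [:: w].

Lemma ext_nth a ws w t i : i \in t ->
  nth om_one (a :: ext ws w t) i = nth om_one (a :: ws) i.
Proof.
case: i => [|i] //= hi; have := leq_maxt hi => hm.
rewrite /ext nth_cat; case: ltnP => // h.
rewrite (nth_default _ h) nth_cat size_nseq.
have -> : i - size ws < maxt t by lia.
by rewrite nth_nseq; case: ifP.
Qed.

Lemma ext_K a ws w t : nth om_one (a :: ext ws w t) (size ws + maxt t).+1 = w.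
Proof.
rewrite /= /ext nth_cat ltnNge leq_addr /= addKn nth_cat size_nseq ltnn subnn.
by [].
Qed.

Lemma term_eval_eq t (v1 v2 : seq (Omega A)) :
  (forall i, i \in t -> nth om_one v1 i = nth om_one v2 i) ->
  term_eval t v1 = term_eval t v2.
Proof.
elim: t => //= i t IH h; rewrite h ?mem_head // IH // => j hj.
by apply: h; rewrite in_cons hj orbT.
Qed.

Lemma ev_term_eval_cat t k (v : seq (Omega A)) (T : finMonoid) (e : A -> T) :
  ev (term_eval (t ++ [:: k]) v) T e = ev (term_eval t v) T e ** ev (nth om_one v k) T e.
Proof.
elim: t => [|i t IH] /=; first by rewrite /ev /= fm_mulr1 fm_mul1.
by rewrite /ev /= -!/(ev _ _ _) IH fm_mulA.
Qed.

Lemma term_eval_cons k t (v : seq (Omega A)) :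
  term_eval (k :: t) v = om_mul (nth om_one v k) (term_eval t v).
Proof. by []. Qed.

Lemma Sigma0_lmul (w p q : Omega A) : Sigma0 Sig p q -> Sigma0 Sig (om_mul w p) (om_mul w q).
Proof.
case=> e [s [phi [t [ws [He Hh Hc -> ->]]]]].
exists e, s, phi, ((size ws + maxt t).+1 :: t), (ext ws w t); split => //.
  by rewrite term_eval_cons ext_K; congr om_mul; apply: term_eval_eq => i hi; rewrite ext_nth.
by rewrite term_eval_cons ext_K; congr om_mul; apply: term_eval_eq => i hi; rewrite ext_nth.
Qed.

Lemma Sigma0_rmul (w p q : Omega A) : Sigma0 Sig p q -> exists p' q',
  [/\ Sigma0 Sig p' q', agree_all p' (om_mul p w) & agree_all q' (om_mul q w)].
Proof.
case=> e [s [phi [t [ws [He Hh Hc -> ->]]]]].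
set k := (size ws + maxt t).+1.
exists (term_eval (t ++ [:: k]) (phi (if s then (projT2 e).2 else (projT2 e).1) :: ext ws w t)).
exists (term_eval (t ++ [:: k]) (phi (if s then (projT2 e).1 else (projT2 e).2) :: ext ws w t)).
split.
- by exists e, s, phi, (t ++ [:: k]), (ext ws w t); split.
- move=> T f; rewrite ev_term_eval_cat ext_K; congr (_ ** _).
  by f_equal; apply: term_eval_eq => i hi; rewrite ext_nth.
- move=> T f; rewrite ev_term_eval_cat ext_K; congr (_ ** _).
  by f_equal; apply: term_eval_eq => i hi; rewrite ext_nth.
Qed.

Lemma prov_lmul (w p q : Omega A) : prov p q -> prov (om_mul w p) (om_mul w q).
Proof.
move=> h; apply: (h (fun a b => prov (om_mul w a) (om_mul w b))).
- by move=> a b hab; apply: prov_S0; apply: Sigma0_lmul.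
- by move=> a b c; apply: prov_trans.
- move=> a b H; apply: prov_closed => ts1 ts2.
  have [a' [b' [h' [h1 h2]]]] := H ts1 ts2.
  by exists (om_mul w a'), (om_mul w b'); split => //; split; apply: agree_mul => //;
    apply: agree_refl.
Qed.

Lemma prov_rmul (w p q : Omega A) : prov p q -> prov (om_mul p w) (om_mul q w).
Proof.
move=> h; apply: (h (fun a b => prov (om_mul a w) (om_mul b w))).
- move=> a b hab; have [p' [q' [h1 h2 h3]]] := Sigma0_rmul w hab.
  exact: prov_agree (prov_S0 h1) h2 h3.
- by move=> a b c; apply: prov_trans.
- move=> a b H; apply: prov_closed => ts1 ts2.
  have [a' [b' [h' [h1 h2]]]] := H ts1 ts2.
  by exists (om_mul a' w), (om_mul b' w); split => //; split; apply: agree_mul => //;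
    apply: agree_refl.
Qed.

End Prov.

Section Final.
Variable B : finType.
Local Notation prov := (@provable Sig B).

Fixpoint prodM (ts : seq (test B)) : finMonoid :=
  if ts is t :: ts' then pairM (projT1 t) (prodM ts') else unitM.

Fixpoint prodE (ts : seq (test B)) : B -> prodM ts :=
  match ts as ts0 return B -> prodM ts0 with
  | [::] => fun _ => tt
  | t :: ts' => fun b => (projT2 t b, prodE ts' b)
  end.

Lemma agree_prod ts (x y : Omega B) :
  ev x (prodM ts) (prodE ts) = ev y (prodM ts) (prodE ts) -> agree ts x y.
Proof.
elim: ts => //= t ts IH h; split.
  have := f_equal (fun z : pairM (projT1 t) (prodM ts) => z.1) h.
  by rewrite /ev (proj2_sig x _ _ _ (fst_mhom _ _)) (proj2_sig y _ _ _ (fst_mhom _ _)).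
apply: IH; have := f_equal (fun z : pairM (projT1 t) (prodM ts) => z.2) h.
by rewrite /ev (proj2_sig x _ _ _ (snd_mhom _ _)) (proj2_sig y _ _ _ (snd_mhom _ _)).
Qed.

Lemma approx (u : Omega B) ts : exists w, agree ts u (word_om w).
Proof.
set P := prodM ts; set E := prodE ts.
pose G := CSM (fm_mul1 (fm_one : P)) (isS_one E).
have pE b : cs_pred E fm_one (E b).
  by apply: cs_predI; rewrite ?fm_mul1 ?fm_mulr1 //; apply: isS_letter.
pose E' : B -> G := fun b => exist (fun y => cs_pred E fm_one y) (E b) (pE b).
have hval : is_mhom (fun z : G => val z) by [].
have n1 := proj2_sig u G P _ hval E'.
set z := proj1_sig u G E' in n1.
have [_ _ [w hw]] := cs_predP (fm_mul1 _) (valP z).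
exists w; apply: agree_prod.
by rewrite ev_word hw n1.
Qed.

Fixpoint maxsz (ts : seq (test B)) :=
  if ts is t :: ts' then maxn #|projT1 t| (maxsz ts') else 0.

Lemma agree_eps ts N : maxsz ts <= N -> agree ts (eps B) (q B N.+1).
Proof.
elim: ts => //= t ts IH; rewrite geq_max => /andP [h1 h2]; split; last exact: IH.
exact: eps_q.
Qed.

Lemma prov_eps : prov (eps B) om_one.
Proof.
apply: prov_closed => ts1 ts2; exists (q B (maxsz ts1).+1), om_one; split.
  exact: prov_omega.
by split; [apply: agree_eps | apply: agree_refl].
Qed.

Lemma prov_eps' : prov om_one (eps B).
Proof. exact: prov_sym prov_eps. Qed.

Definition yb (b : B) : Omega B := om_mul (eps B) (om_mul (om_letter b) (eps B)).
Definition phi := subst yb.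

Lemma prov_letter b : prov (om_letter b) (yb b).
Proof.
have s1 := prov_lmul (om_letter b) prov_eps'.
have s1' : prov (om_letter b) (om_mul (om_letter b) (eps B)).
  by apply: prov_agree s1 _ _ => T e //; rewrite /ev /= fm_mulr1.
have s2 := prov_rmul (om_mul (om_letter b) (eps B)) prov_eps'.
have s2' : prov (om_mul (om_letter b) (eps B)) (yb b).
  by apply: prov_agree s2 _ _ => T e //; rewrite /ev /= fm_mul1.
exact: prov_trans s1' s2'.
Qed.

Lemma prov_word w : prov (word_om w) (phi (word_om w)).
Proof.
elim: w => [|b w IH] /=.
  by apply: prov_agree (prov_refl om_one) _ _.
have h1 := prov_lmul (om_letter b) IH.
have h2 := prov_rmul (phi (word_om w)) (prov_letter b).
by apply: prov_agree (prov_trans h1 h2) _ _.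
Qed.

Lemma prov_phi u : prov u (phi u).
Proof.
apply: prov_closed => ts1 ts2.
have [w /agree_cat [h1 h2]] := approx u (ts1 ++ map (pull yb) ts2).
exists (word_om w), (phi (word_om w)); split; first exact: prov_word.
by split => //; apply: agree_subst.
Qed.

Definition sigma u := om_mul (eps B) (phi u).

Lemma prov_sigma u : prov u (sigma u).
Proof.
apply: prov_trans (prov_phi u) _.
by apply: prov_agree (prov_rmul (phi u) prov_eps') _ _ => T e //; rewrite /ev /= fm_mul1.
Qed.

Section GT.
Variables (T : finMonoid) (e : B -> T).
Let f := ev (eps B) T e.
Let Hff : f ** f = f := q_idem _ e.
Let HfS : isS e f := isS_q _ e.
Let HfJ : Jmin e f := q_Jmin (Cov_card e) (leqnn _).

Definition GT := CSM Hff HfS.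

Lemma pg b : cs_pred e f (f ** (e b ** f)).
Proof.
apply: cs_predI; first by rewrite fm_mulA Hff.
  by rewrite -!fm_mulA Hff.
by apply: isS_mul => //; apply: isS_mul => //; apply: isS_letter.
Qed.

Definition g' : B -> GT := fun b => exist (fun y => cs_pred e f y) _ (pg b).

Lemma GT_pow (z : GT) m : #|T| <= m -> fm_pow z m`! = fm_one.
Proof.
move=> hm; apply: val_inj; rewrite CSM_pow.
case/(cs_predP Hff): (valP z) => h1 h2 h3.
by rewrite (crit Hff HfS HfJ h3 h1 h2 hm) Hff.
Qed.

Definition om_pow (A : finType) (x : Omega A) n := iter n (om_mul x) om_one.

Lemma ev_om_pow (A : finType) (x : Omega A) n (S : finMonoid) (e0 : A -> S) :
  ev (om_pow x n) S e0 = fm_pow (ev x S e0) n.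
Proof. by elim: n => [|n IH] //=; rewrite -IH. Qed.

Fixpoint maxsz1 (ts : seq (test unit)) :=
  if ts is t :: ts' then maxn #|projT1 t| (maxsz1 ts') else 0.

Lemma agree_pow ts m : maxsz1 ts <= m ->
  agree ts (om_omega (om_letter tt)) (om_pow (om_letter tt) m`!).
Proof.
elim: ts => //= t ts IH; rewrite geq_max => /andP [h1 h2]; split; last exact: IH.
by rewrite ev_om_pow (fm_pow_fact _ h1).
Qed.

Lemma models_GT : models Sig GT.
Proof.
move=> e0 -> psi [h1 hM] hc /=.
have [ts hts] := hc (om_omega (om_letter tt)).
set m := maxn #|T| (maxsz1 ts).
rewrite (hts _ (agree_pow (leq_maxr #|T| _))) h1.
have -> : forall n, psi (om_pow (om_letter tt) n) = fm_pow (psi (om_letter tt)) n.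
  by elim=> [|n IH] //=; rewrite hM IH.
exact: GT_pow (leq_maxl _ _).
Qed.

Lemma sigma_val u : ev (sigma u) T e = val (ev u GT g').
Proof.
pose OM := optM GT.
pose h : OM -> T := fun o => if o is Some y then val y else fm_one.
pose k : OM -> GT := fun o => if o is Some y then y else fm_one.
have hh : is_mhom h.
  split => // -[a|] [b|] //=; by rewrite ?fm_mul1 ?fm_mulr1.
have hk : is_mhom k.
  split => // -[a|] [b|] //;
    first [exact: (esym (fm_mulr1 _)) | exact: (esym (fm_mul1 _))].
pose g1 : B -> OM := fun b => Some (g' b).
have n1 := proj2_sig u OM T h hh g1.
have n2 := proj2_sig u OM GT k hk g1.
change (f ** proj1_sig u T (fun b => f ** (e b ** f)) = val (proj1_sig u GT g')).
have e1 : proj1_sig u T (fun b => f ** (e b ** f)) = h (proj1_sig u OM g1) := esym n1.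
have e2 : proj1_sig u GT g' = k (proj1_sig u OM g1) := esym n2.
rewrite e1 e2; case: (proj1_sig u OM g1) => [y|] /=; last by rewrite fm_mulr1.
by case/(cs_predP Hff): (valP y).
Qed.

End GT.

Lemma sigma_eq u v : (forall T : finMonoid, models Sig T -> holds_in T u v) ->
  agree_all (sigma u) (sigma v).
Proof.
move=> H T e; rewrite !sigma_val; congr val.
pose psi := fun x : Omega B => ev x (GT e) (g' e).
have hh : om_hom_fin psi by [].
have hc : om_continuous_fin psi.
  move=> x; exists [:: existT (fun S : finMonoid => B -> S) (GT e) (g' e)].
  by move=> y /= [h _]; rewrite /psi h.
exact: (H _ (@models_GT T e) psi hh hc).
Qed.

End Final.

Theorem theorem8p3 : h_strong (fun e => e = omega_eq_one).
Proof.
move=> B u v H.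
apply: prov_trans (prov_sigma u) _.
apply: prov_sym; apply: prov_agree (prov_sigma v) _ _ => // T e.
by rewrite (sigma_eq H).
Qed.
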